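(* Let $q$ be a prime power, $n\ge 1$, and let $C=\langle B_r\rangle\oplus\langle B_t\rangle\subseteq\mathbb{F}_q^n$ be an $\mathbb{F}_q$-linear code, where $B_r$ is an $r\times n$ matrix and $B_t$ a $t\times n$ matrix over $\mathbb{F}_q$, each with linearly independent rows, and $t=\dim_{\mathbb{F}_q}\langle B_t\rangle\ge 2$. Let $A$ be an invertible $t\times t$ matrix over $\mathbb{F}_q$ having no eigenvalue in $\mathbb{F}_q$, and let $D_A\subseteq\mathbb{F}_q^{2n}$ be the code defined below. Then $D_A$ gives rise to an EAQECC with parameters $[[n,\,n-2r-t+c',\,d';\,c']]_q$, i.e. $c(D_A)=c'$, $k(D_A)=n-2r-t+c'$ and $d(D_A)=d'$, where $$c'=\frac12\,\mathrm{rank}\begin{pmatrix} B_tB_t^TA^T-AB_tB_t^T & -AB_tB_r^T & B_tB_r^T\\ B_rB_t^TA^T & 0 & B_rB_r^T\\ -B_rB_t^T & -B_rB_r^T & 0\end{pmatrix},$$ and $d'\ge \min\left\{\delta_1,\left\lceil\left(1+\frac1q\right)\delta_2\right\rceil\right\}$ with $\delta_1=d_H(C^{\perp_e})$ and $\delta_2=d_H(\langle B_r\rangle^{\perp_e})$.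
   Context: $\mathbb{F}_q$ is the finite field with $q$ elements. For $x,y\in\mathbb{F}_q^n$, $x\cdot_e y=\sum_i x_iy_i$ is the Euclidean inner product and $V^{\perp_e}$ denotes the Euclidean dual of a subspace $V$. For a matrix $B$, $\langle B\rangle$ is the row space of $B$. $d_H(V)$ is the minimum Hamming weight of a nonzero vector of $V$. On $\mathbb{F}_q^{2n}$ the symplectic product is $(x|y)\cdot_s(z|w)=x\cdot_e w-z\cdot_e y$, and $D^{\perp_s}$ denotes the symplectic dual of $D$. The symplectic weight of $(x|y)$ is $\#\{j:(x_j,y_j)\ne(0,0)\}$ and for $S\subseteq\mathbb{F}_q^{2n}$, $d_s(S)$ is the minimum symplectic weight of a nonzero element of $S$. For an $\mathbb{F}_q$-linear code $D\subseteq\mathbb{F}_q^{2n}$, the EAQECC it gives rise to has parameters $[[n,k(D),d(D);c(D)]]_q$, where $c(D)=\frac12(\dim D-\dim(D\cap D^{\perp_s}))$, $k(D)=n-\dim D+c(D)$ and $d(D)=d_s\big(D^{\perp_s}\setminus(D\cap D^{\perp_s})\big)$. Given $C=\langle B_r\rangle\oplus\langle B_t\rangle$ as in the claim and an invertible $t\times t$ matrix $A$, $D_A\subseteq\mathbb{F}_q^{2n}$ is the $\mathbb{F}_q$-linear code generated by the rows of the matrix $\begin{pmatrix}B_t & AB_t\\ B_r & 0\\ 0 & B_r\end{pmatrix}$ (called a Steane enlargement of the EAQECC determined by $C$). *)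

(* Defs.v *)
From HB Require Import structures.
From mathcomp Require Import all_boot all_order all_algebra all_field.
Set Implicit Arguments. Unset Strict Implicit. Unset Printing Implicit Defensive.
Import Order.TTheory GRing.Theory Num.Theory.
Local Open Scope ring_scope.

(* Codes are represented as row spaces of matrices (mxalgebra, %MS scope).
   A vector of F_q^{2n} is a row vector 'rV_(n + n) written (x | y)
   = row_mx x y, with x = lsubmx, y = rsubmx. *)

Section Defs.
Variable F : finFieldType.

Definition wtH (n : nat) (x : 'rV[F]_n) : nat := #|[set j : 'I_n | x 0 j != 0]|.

Definition wtS (n : nat) (z : 'rV[F]_(n + n)) : nat :=
  #|[set j : 'I_n | (lsubmx z 0 j != 0) || (rsubmx z 0 j != 0)]|.

Definition sympl (n : nat) (u v : 'rV[F]_(n + n)) : F :=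
  (lsubmx u *m (rsubmx v)^T - lsubmx v *m (rsubmx u)^T) 0 0.

Definition edual (m n : nat) (B : 'M[F]_(m, n)) : 'M[F]_n := kermx B^T.

(* Symplectic dual of <D>: u *m col_mx (rsubmx D)^T (- (lsubmx D)^T) is
   the row vector (sympl u (row i D))_i, so its kernel is exactly
   { u | forall i, sympl u (row i D) = 0 } (see lemma sdualP). *)
Definition sdual (m n : nat) (D : 'M[F]_(m, n + n)) : 'M[F]_(n + n) :=
  kermx (col_mx (rsubmx D)^T (- (lsubmx D)^T)).

(* minimum Hamming distance of the row space of V; n.+1 plays the role of
   +infinity when V has no nonzero vector (all weights are <= n). *)
Definition dH (m n : nat) (V : 'M[F]_(m, n)) : nat :=
  \big[minn/n.+1]_(x : 'rV[F]_n | (x <= V)%MS && (x != 0)) wtH x.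

Definition cE (m n : nat) (D : 'M[F]_(m, n + n)) : nat :=
  (\rank D - \rank (D :&: sdual D))./2.

Definition kE (m n : nat) (D : 'M[F]_(m, n + n)) : int :=
  (n%:Z - (\rank D)%:Z + (cE D)%:Z)%R.

(* minimum symplectic weight of D^{perp_s} \ (D cap D^{perp_s});
   n.+1 plays the role of +infinity for the empty set. *)
Definition dE (m n : nat) (D : 'M[F]_(m, n + n)) : nat :=
  \big[minn/n.+1]_(x : 'rV[F]_(n + n) |
       (x <= sdual D)%MS && ~~ (x <= D :&: sdual D)%MS) wtS x.

Definition DA (n r t : nat) (Br : 'M[F]_(r, n)) (Bt : 'M[F]_(t, n))
  (A : 'M[F]_t) : 'M[F]_(t + r + r, n + n) :=
  col_mx (col_mx (row_mx Bt (A *m Bt)) (row_mx Br 0)) (row_mx 0 Br).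

Definition cmat (n r t : nat) (Br : 'M[F]_(r, n)) (Bt : 'M[F]_(t, n))
  (A : 'M[F]_t) : 'M[F]_(t + r + r) :=
  col_mx
    (col_mx
      (row_mx (row_mx (Bt *m Bt^T *m A^T - A *m Bt *m Bt^T) (- (A *m Bt *m Br^T)))
              (Bt *m Br^T))
      (row_mx (row_mx (Br *m Bt^T *m A^T) 0) (Br *m Br^T)))
    (row_mx (row_mx (- (Br *m Bt^T)) (- (Br *m Br^T))) 0).

End Defs.

(* Main.v *)
Require Import Defs.
From HB Require Import structures.
From mathcomp Require Import all_boot all_order all_algebra all_field.
From mathcomp Require Import zify.
Import Order.TTheory GRing.Theory Num.Theory.
Local Open Scope ring_scope.

Section Aux.
Variable F : finFieldType.

Lemma card_sum (n : nat) (P : pred 'I_n) : #|[set j | P j]| = (\sum_j (P j : nat))%N.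
Proof.
rewrite -sum1dep_card big_mkcond /=; apply: eq_bigr => j _; by case: (P j).
Qed.

Lemma coord_bound (a b : F) :
  ((a != 0%R) + \sum_(l : F) ((b - l * a)%R != 0%R) <= #|F| * ((a != 0%R) || (b != 0%R)))%N.
Proof.
have [->|a0] := eqVneq a 0.
  rewrite /= add0n; under eq_bigr do rewrite mulr0 subr0.
  rewrite sum_nat_const. by case: (b != 0%R); rewrite ?muln0 ?muln1.
rewrite /= muln1 (bigD1 (b / a)) //= divfK // subrr eqxx add0n.
have: (\sum_(i | i != b / a) ((b - i * a)%R != 0%R) <= \sum_(i | i != b / a) 1)%N.
  by apply: leq_sum => i _; case: (_ != 0).
rewrite sum1dep_card cardsE cardC1 => h.
have q0 : (0 < #|F|)%N by apply/card_gt0P; exists 0.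
rewrite add1n -(prednK q0) ltnS; exact: h.
Qed.

Lemma count_main (n : nat) (x y : 'rV[F]_n) :
  (wtH x + \sum_(l : F) wtH (y - l *: x) <=
   #|F| * #|[set j : 'I_n | (x ord0 j != 0%R) || (y ord0 j != 0%R)]|)%N.
Proof.
rewrite /wtH !card_sum.
rewrite (eq_bigr (fun l : F => \sum_(j < n) (((y - l *: x) ord0 j != 0%R) : nat))); last by move=> l _; rewrite card_sum.
rewrite exchange_big /= -big_split /= big_distrr /=.
apply: leq_sum => j _.
under eq_bigr do rewrite !mxE.
exact: coord_bound.
Qed.

Lemma bigmin_le_seq (I : eqType) (s : seq I) (P : pred I) (G : I -> nat) m x :
  x \in s -> P x -> (\big[minn/m]_(i <- s | P i) G i <= G x)%N.
Proof.
elim: s => // a s IH; rewrite inE big_cons => /orP[/eqP <-|xs] Px.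
  by rewrite Px geq_minl.
by case: (P a); [rewrite geq_min IH ?orbT | apply: IH].
Qed.

Lemma dH_le (m n : nat) (V : 'M[F]_(m, n)) x : (x <= V)%MS -> x != 0 -> (dH V <= wtH x)%N.
Proof. by move=> xV x0; rewrite /dH; apply: bigmin_le_seq; rewrite ?mem_index_enum ?xV. Qed.

Lemma dH_leS (m n : nat) (V : 'M[F]_(m, n)) : (dH V <= n.+1)%N.
Proof. rewrite /dH; apply: (big_ind (fun v => v <= n.+1)%N) => //; first by move=> a b ha hb; rewrite geq_min ha.
move=> i _; apply: leqW; rewrite /wtH; apply: leq_trans (max_card _) _; by rewrite card_ord.
Qed.

End Aux.

Section S.
Variables (F : finFieldType) (n r t : nat) (Br : 'M[F]_(r, n)) (Bt : 'M[F]_(t, n)) (A : 'M[F]_t).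

Lemma DA_lr : DA Br Bt A = row_mx (col_mx (col_mx Bt Br) 0) (col_mx (col_mx (A *m Bt) 0) Br).
Proof.
rewrite /DA -[col_mx (row_mx Bt _) _]/(block_mx _ _ _ _) block_mxEh.
by rewrite -[col_mx (row_mx _ _) (row_mx 0 Br)]/(block_mx _ _ _ _) block_mxEh.
Qed.

Lemma DA_l : lsubmx (DA Br Bt A) = col_mx (col_mx Bt Br) 0.
Proof. by rewrite DA_lr row_mxKl. Qed.
Lemma DA_r : rsubmx (DA Br Bt A) = col_mx (col_mx (A *m Bt) 0) Br.
Proof. by rewrite DA_lr row_mxKr. Qed.

Lemma DS_cmat : let D := DA Br Bt A in
  D *m col_mx (rsubmx D)^T (- (lsubmx D)^T) = cmat Br Bt A.
Proof.
move=> D; rewrite {1}/D DA_lr /D DA_l DA_r mul_row_col.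
rewrite !tr_col_mx ?linearN /= ?tr_col_mx ?trmx0 ?opp_row_mx.
rewrite ?mul_col_mx ?mul_mx_row ?mul0mx ?mulmx0 ?add_col_mx ?add_row_mx /cmat.
by rewrite ?opp_col_mx ?opp_row_mx ?add_col_mx ?add_row_mx ?trmx_mul ?mulmxA ?oppr0 ?(addr0, add0r, subr0, sub0r, mulNmx, mulmxN).
Qed.

Lemma rowfree_col : row_free Br -> row_free Bt -> (Br :&: Bt)%MS = 0 -> row_free (col_mx Br Bt).
Proof.
move=> fr ft cap0; rewrite /row_free.
have := mxrank_sum_cap Br Bt; rewrite cap0 mxrank0 addn0 addsmxE => ->.
by rewrite (eqP fr) (eqP ft).
Qed.

Lemma rank_DA : row_free Br -> row_free Bt -> (Br :&: Bt)%MS = 0 ->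
  \rank (DA Br Bt A) = (t + r + r)%N.
Proof.
move=> fr ft cap0; have fC := rowfree_col fr ft cap0.
apply/eqP; rewrite -/(row_free _) -kermx_eq0; apply/rowV0P => v /sub_kermxP.
rewrite -(hsubmxK v) -(hsubmxK (lsubmx v)) /DA !mul_row_col !mul_mx_row ?mulmx0 ?mul0mx.
rewrite !add_row_mx ?addr0 ?add0r -row_mx0 => /eq_row_mx [h1 h2].
have: row_mx (rsubmx (lsubmx v)) (lsubmx (lsubmx v)) *m col_mx Br Bt == 0.
  by rewrite mul_row_col addrC h1.
rewrite mulmx_free_eq0 // row_mx_eq0 => /andP[/eqP hb /eqP ha].
move: h2; rewrite ha !mul0mx add0r => /eqP; rewrite mulmx_free_eq0 // => /eqP ->.
by rewrite hb row_mx0 row_mx0.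
Qed.

Lemma sdual_cond (x : 'rV[F]_(n + n)) : (x <= sdual (DA Br Bt A))%MS ->
  [/\ lsubmx x *m (A *m Bt)^T = rsubmx x *m Bt^T, rsubmx x *m Br^T = 0
    & lsubmx x *m Br^T = 0].
Proof.
rewrite /sdual DA_l DA_r => /sub_kermxP.
rewrite -{1}(hsubmxK x) mul_row_col !tr_col_mx ?linearN /= ?tr_col_mx ?trmx0 ?opp_row_mx.
rewrite ?mul_mx_row ?mulmx0 ?add_row_mx ?oppr0 ?addr0 ?add0r.
rewrite !opp_row_mx !add_row_mx oppr0 addr0 sub0r -!row_mx0 => /eq_row_mx [/eq_row_mx [h1 h2] h3].
split => //; first by apply/eqP; rewrite -subr_eq0 h1.
by apply/eqP; rewrite -oppr_eq0 h2.
Qed.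

Lemma wtH_l (x : 'rV[F]_(n+n)) : (wtH (lsubmx x) <= wtS x)%N.
Proof. by apply: subset_leq_card; apply/subsetP => j; rewrite !inE => ->. Qed.
Lemma wtH_r (x : 'rV[F]_(n+n)) : (wtH (rsubmx x) <= wtS x)%N.
Proof. by apply: subset_leq_card; apply/subsetP => j; rewrite !inE => ->; rewrite orbT. Qed.

Lemma no_eig (hA : forall a, ~~ eigenvalue A a) (a : 'rV_t) l :
  a != 0 -> a *m A^T - l *: a != 0.
Proof.
move=> a0; have fr : row_free (A^T - l%:M).
  have := hA l; rewrite /eigenvalue /eigenspace negbK kermx_eq0 /row_free.
  by rewrite -mxrank_tr linearB /= tr_scalar_mx.
by rewrite -mul_mx_scalar -mulmxBr mulmx_free_eq0.
Qed.

Lemma dist_x (hA : forall a, ~~ eigenvalue A a) (x : 'rV[F]_(n + n)) :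
  (x <= sdual (DA Br Bt A))%MS -> ~~ (x <= DA Br Bt A)%MS ->
  (dH (edual (col_mx Br Bt)) <= wtS x)%N \/
  ((#|F| + 1) * dH (edual Br) <= #|F| * wtS x)%N.
Proof.
move=> /sdual_cond [e1 e2 e3] nxD.
have [a0|a0] := eqVneq (lsubmx x *m Bt^T) 0.
  left; have b0 : rsubmx x *m Bt^T = 0 by rewrite -e1 trmx_mul mulmxA a0 mul0mx.
  have inC z : z *m Br^T = 0 -> z *m Bt^T = 0 -> (z <= edual (col_mx Br Bt))%MS.
    by move=> h1 h2; apply/sub_kermxP; rewrite tr_col_mx mul_mx_row h1 h2 row_mx0.
  have [x10|x10] := eqVneq (lsubmx x) 0.
    have [y10|y10] := eqVneq (rsubmx x) 0.
      by move: nxD; rewrite -(hsubmxK x) x10 y10 row_mx0 sub0mx.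
    by apply: leq_trans (wtH_r x); apply: dH_le => //; apply: inC.
  by apply: leq_trans (wtH_l x); apply: dH_le => //; apply: inC.
right; set d2 := dH (edual Br).
have x10 : lsubmx x != 0 by apply: contraNneq a0 => ->; rewrite mul0mx.
have hx : (d2 <= wtH (lsubmx x))%N by apply: dH_le => //; apply/sub_kermxP.
have hv l : (d2 <= wtH (rsubmx x - l *: lsubmx x))%N.
  apply: dH_le.
    by apply/sub_kermxP; rewrite mulmxBl -scalemxAl e2 e3 scaler0 subr0.
  apply/eqP => h; move/eqP: (no_eig hA _ l a0); apply.
  have : (rsubmx x - l *: lsubmx x) *m Bt^T = 0 by rewrite h mul0mx.
  by rewrite mulmxBl -scalemxAl -e1 trmx_mul mulmxA.
have := @count_main _ _ (lsubmx x) (rsubmx x).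
have -> : #|[set j | (lsubmx x ord0 j != 0) || (rsubmx x ord0 j != 0)]| = wtS x by [].
apply: leq_trans.
rewrite mulnDl mul1n addnC; apply: leq_add => //.
rewrite -sum_nat_const; exact: leq_sum.
Qed.
End S.

Theorem theorem2p2 (F : finFieldType) (n r t : nat)
  (Br : 'M[F]_(r, n)) (Bt : 'M[F]_(t, n)) (A : 'M[F]_t) :
  (0 < n)%N -> (2 <= t)%N ->
  row_free Br -> row_free Bt ->
  (Br :&: Bt)%MS = 0 ->
  A \in unitmx -> (forall a : F, ~~ eigenvalue A a) ->
  let D := DA Br Bt A in
  let c' := ((\rank (cmat Br Bt A))./2)%N in
  let q := #|F| in
  let delta1 := dH (edual (col_mx Br Bt)) in
  let delta2 := dH (edual Br) in
  [/\ cE D = c',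
      kE D = n%:Z - 2%:Z * r%:Z - t%:Z + c'%:Z
    & Order.min delta1%:Z (Num.ceil ((1 + q%:R^-1) * delta2%:R : rat))
        <= (dE D)%:Z].
Proof.
move=> n0 t2 fr ft cap0 Au hA D c' q delta1 delta2.
have rD : \rank D = (t + r + r)%N by apply: rank_DA.
have hcE : cE D = c'.
  rewrite /cE /c' /sdual; congr (_./2).
  have := mxrank_mul_ker D (col_mx (rsubmx D)^T (- (lsubmx D)^T)).
  by rewrite /D DS_cmat => <-; rewrite addnK.
split => //.
  rewrite /kE hcE rD; lia.
rewrite /dE; set K := Order.min _ _.
have Kd1 : K <= delta1%:Z by rewrite ge_min lexx.
apply: (big_ind (fun v : nat => K <= v%:Z)).
- by apply: le_trans Kd1 _; rewrite lez_nat dH_leS.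
- by move=> a b ha hb; case: (leqP a b).
move=> x /andP[xs nx].
have nxD : ~~ (x <= D)%MS by move: nx; rewrite sub_capmx xs andbT.
case: (@dist_x F n r t Br Bt A hA x xs nxD) => h.
  by apply: le_trans Kd1 _; rewrite lez_nat.
rewrite ge_min; apply/orP; right; rewrite ceil_le_int.
have q0 : (0 < q%:R :> rat) by rewrite ltr0n; apply/card_gt0P; exists 0.
have -> : (1 + q%:R^-1) = (q%:R + 1) / q%:R :> rat.
  by rewrite mulrDl divff ?mul1r // gt_eqF.
rewrite mulrAC ler_pdivrMr //.
rewrite [_ * q%:R]mulrC; move: h; rewrite -(ler_nat rat) !natrM natrD => h; exact: h.
Qed.
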